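(* Let $n\in\mathbb{R}$, let $\Omega_1\in\mathbb{R}[x]$ be a nonzero polynomial of degree at most $2$, let $L\in\mathbb{R}[x]$ have degree at most $1$, and let $I$ be an open interval on which $\Omega_1$ has no zeros. Consider the quadratic system $$\dot x=\Omega_1(x),\qquad \dot y=(2n+1)L'(x)\Omega_1(x)-\frac{n(n+1)}{2}\Omega_1(x)\Omega_1''(x)-L(x)^2+y^2,$$ and the linear equation $$\Omega_1(x)w''+(\Omega_1'(x)-2L(x))w'+\frac n2\left(4L'(x)-(n+1)\Omega_1''(x)\right)w=0.\qquad( * )$$ (i) For every solution $p\in C^2(I)$ of $( * )$, the function $f_p(x,y)=p(x)\,y+\Omega_1(x)p'(x)-L(x)p(x)$ satisfies $\Omega_1\,\partial_xf_p+\dot y\,\partial_yf_p=(y+L(x))\,f_p$ on $I\times\mathbb{R}$ (here $\dot y$ denotes the right-hand side of the second equation). (ii) If $\{p_1,p_2\}$ is a fundamental system of solutions of $( * )$ on $I$, then $H=f_{p_1}/f_{p_2}$ is a first integral of the system on the open set $\{(x,y)\in I\times\mathbb{R}: f_{p_2}(x,y)\neq0\}$.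
   Context: A first integral of the planar system $\dot x=P,\dot y=Q$ on an open set $U$ is a $C^1$ function $H$ with $P\partial_xH+Q\partial_yH=0$ on $U$ which is not constant on any nonempty open subset of $U$. *)

(* Defs.v *)
From Stdlib Require Import Reals.
From Coquelicot Require Import Coquelicot.
Open Scope R_scope.

Definition poly2 (c2 c1 c0 : R) (x : R) : R := c2 * x ^ 2 + c1 * x + c0.
Definition poly1 (l1 l0 : R) (x : R) : R := l1 * x + l0.

Definition in_interval (a b : Rbar) (x : R) : Prop := Rbar_lt a x /\ Rbar_lt x b.

Definition ydot (n : R) (Om L : R -> R) (x y : R) : R :=
  (2 * n + 1) * Derive L x * Om x
  - n * (n + 1) / 2 * Om x * Derive (Derive Om) x
  - (L x) ^ 2 + y ^ 2.

Definition is_C2_solution (n : R) (Om L : R -> R) (a b : Rbar) (p : R -> R) : Prop :=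
  forall x, in_interval a b x ->
    ex_derive p x /\ ex_derive (Derive p) x /\ continuous (Derive (Derive p)) x /\
    Om x * Derive (Derive p) x + (Derive Om x - 2 * L x) * Derive p x
    + n / 2 * (4 * Derive L x - (n + 1) * Derive (Derive Om) x) * p x = 0.

Definition fundamental_system (n : R) (Om L : R -> R) (a b : Rbar) (p1 p2 : R -> R) : Prop :=
  is_C2_solution n Om L a b p1 /\ is_C2_solution n Om L a b p2 /\
  forall c1 c2 : R, (forall x, in_interval a b x -> c1 * p1 x + c2 * p2 x = 0) ->
    c1 = 0 /\ c2 = 0.

Definition f_p (Om L p : R -> R) (x y : R) : R :=
  p x * y + Om x * Derive p x - L x * p x.

Definition dx (F : R -> R -> R) (x y : R) : R := Derive (fun t => F t y) x.
Definition dy (F : R -> R -> R) (x y : R) : R := Derive (fun t => F x t) y.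

Definition open2 (V : R -> R -> Prop) : Prop :=
  forall x y, V x y -> exists eps : posreal, forall u v,
    Rabs (u - x) < eps -> Rabs (v - y) < eps -> V u v.

Definition first_integral (P Q H : R -> R -> R) (U : R -> R -> Prop) : Prop :=
  (forall x y, U x y ->
     ex_derive (fun t => H t y) x /\ ex_derive (fun t => H x t) y /\
     continuity_2d_pt (dx H) x y /\ continuity_2d_pt (dy H) x y /\
     P x y * dx H x y + Q x y * dy H x y = 0) /\
  (forall V : R -> R -> Prop, open2 V -> (exists x y, V x y) ->
     (forall x y, V x y -> U x y) ->
     exists x1 y1 x2 y2, V x1 y1 /\ V x2 y2 /\ H x1 y1 <> H x2 y2).

(* Main.v *)
Require Import Defs.
From Stdlib Require Import Reals Lra Psatz Classical.
From Coquelicot Require Import Coquelicot.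
Open Scope R_scope.


Lemma loc_ex (P: R->Prop) x: locally x P -> exists d, 0<d /\ forall u, Rabs (u-x) < d -> P u.
Proof. intros [e He]. exists e. split. apply cond_pos. intros u Hu. apply He. exact Hu. Qed.

Lemma cont_bound (a : R -> R) t : continuous a t ->
  exists d M, 0 < d /\ 0 <= M /\ forall u, Rabs (u - t) < d -> Rabs (a u) <= M.
Proof.
  intros Ha. apply continuity_pt_filterlim in Ha.
  apply continuity_pt_locally with (eps := mkposreal 1 Rlt_0_1) in Ha.
  destruct (loc_ex _ _ Ha) as [d [Hd H]]. exists d, (Rabs (a t) + 1). split; [lra|split].
  pose proof (Rabs_pos (a t)); lra.
  intros u Hu. specialize (H u Hu). simpl in H.
  pose proof (Rabs_triang_inv (a u) (a t)). lra.
Qed.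

Lemma isd_mul f g x df dg : is_derive f x df -> is_derive g x dg ->
  is_derive (fun t => f t * g t) x (df * g x + f x * dg).
Proof. intros. apply (is_derive_mult f g x df dg); auto. intros; apply Rmult_comm. Qed.
Lemma isd_plus f g x df dg : is_derive f x df -> is_derive g x dg ->
  is_derive (fun t => f t + g t) x (df + dg).
Proof. intros. apply (is_derive_plus f g x df dg); auto. Qed.
Lemma isd_minus f g x df dg : is_derive f x df -> is_derive g x dg ->
  is_derive (fun t => f t - g t) x (df - dg).
Proof. intros. apply (is_derive_minus f g x df dg); auto. Qed.
Lemma isd_exp k t u : is_derive (fun u => exp (k * (u - t))) u (exp (k * (u - t)) * k).
Proof. auto_derive. auto. change (k * 1 * exp (k * (u - t)) = exp (k * (u - t)) * k). ring. Qed.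

Lemma local_zero (q q1 q2 a b : R -> R) (t r : R) :
  0 < r ->
  (forall u, Rabs (u - t) < r -> is_derive q u (q1 u) /\ is_derive q1 u (q2 u) /\
      q2 u = a u * q1 u + b u * q u) ->
  continuous a t -> continuous b t -> q t = 0 -> q1 t = 0 ->
  exists d, 0 < d /\ forall u, Rabs (u - t) < d -> q u = 0 /\ q1 u = 0.
Proof.
  intros Hr Hq Ha Hb H0 H1.
  destruct (cont_bound a t Ha) as [da [Ma [Hda [HMa Ba]]]].
  destruct (cont_bound b t Hb) as [db [Mb [Hdb [HMb Bb]]]].
  set (d := Rmin r (Rmin da db)).
  assert (Hd : 0 < d) by (unfold d; repeat apply Rmin_glb_lt; lra).
  assert (Hdr : d <= r) by apply Rmin_l.
  assert (Hdda : d <= da) by (unfold d; eapply Rle_trans; [apply Rmin_r| apply Rmin_l]).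
  assert (Hddb : d <= db) by (unfold d; eapply Rle_trans; [apply Rmin_r| apply Rmin_r]).
  exists d. split; [exact Hd|]. intros s Hs.
  set (C := 1 + Mb + 2 * Ma).
  set (sg := if Rle_dec t s then 1 else -1).
  set (E := fun u => q u * q u + q1 u * q1 u).
  set (dE := fun u => 2 * q u * q1 u + 2 * q1 u * q2 u).
  set (g := fun u => E u * exp (- C * sg * (u - t))).
  set (dg := fun u => dE u * exp (- C * sg * (u - t)) + E u * (exp (- C * sg * (u - t)) * (- C * sg))).
  assert (Hin : forall u, Rmin t s <= u <= Rmax t s -> Rabs (u - t) < d).
  { intros u Hu. unfold Rmin, Rmax in Hu. destruct (Rle_dec t s);
    apply Rabs_def2 in Hs; apply Rabs_def1; lra. }
  assert (Dg : forall u, Rabs (u - t) < d -> is_derive g u (dg u)).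
  { intros u Hu. destruct (Hq u ltac:(lra)) as [D1 [D2 _]].
    replace (dg u)
      with ((q1 u * q u + q u * q1 u + (q2 u * q1 u + q1 u * q2 u)) * exp (- C * sg * (u - t))
            + (q u * q u + q1 u * q1 u) * (exp (- C * sg * (u - t)) * (- C * sg))) by (unfold dg, dE, E; ring).
    unfold g, E.
    apply (isd_mul (fun u => q u * q u + q1 u * q1 u) (fun u => exp (-C*sg*(u-t)))).
    - apply (isd_plus (fun u => q u * q u) (fun u => q1 u * q1 u)).
      + apply (isd_mul q q); auto.
      + apply (isd_mul q1 q1); auto.
    - apply (isd_exp (-C*sg) t u). }
  assert (Ct : forall u, Rmin t s <= u <= Rmax t s -> continuity_pt g u).
  { intros u Hu. apply continuity_pt_filterlim. apply (@ex_derive_continuous R_AbsRing R_NormedModule g u).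
    eexists. apply Dg. auto. }
  destruct (MVT_gen g t s dg) as [c [Hc Hmvt]].
  { intros u Hu. apply Dg, Hin. lra. }
  { exact Ct. }
  assert (Hct := Hin c Hc).
  destruct (Hq c ltac:(lra)) as [_ [_ Heq]].
  assert (Bac := Ba c ltac:(lra)). assert (Bbc := Bb c ltac:(lra)).
  apply Rabs_le_between in Bac. apply Rabs_le_between in Bbc.
  assert (gt0 : g t = 0) by (unfold g, E; rewrite H0, H1; ring).
  assert (HE : dE c <= C * E c /\ - (C * E c) <= dE c).
  { unfold dE, E, C. rewrite Heq.
    assert (0 <= (Ma - a c) * (q1 c * q1 c)) by (apply Rmult_le_pos; [lra| apply Rle_0_sqr]).
    assert (0 <= (Ma + a c) * (q1 c * q1 c)) by (apply Rmult_le_pos; [lra| apply Rle_0_sqr]).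
    assert (0 <= (Mb - b c) * ((q c + q1 c) * (q c + q1 c))) by (apply Rmult_le_pos; [lra| apply Rle_0_sqr]).
    assert (0 <= (Mb + b c) * ((q c - q1 c) * (q c - q1 c))) by (apply Rmult_le_pos; [lra| apply Rle_0_sqr]).
    assert (0 <= (Mb - b c) * ((q c - q1 c) * (q c - q1 c))) by (apply Rmult_le_pos; [lra| apply Rle_0_sqr]).
    assert (0 <= (Mb + b c) * ((q c + q1 c) * (q c + q1 c))) by (apply Rmult_le_pos; [lra| apply Rle_0_sqr]).
    assert (0 <= (q c - q1 c) * (q c - q1 c)) by apply Rle_0_sqr.
    assert (0 <= (q c + q1 c) * (q c + q1 c)) by apply Rle_0_sqr.
    split; nra. }
  assert (Hexp := exp_pos (- C * sg * (c - t))).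
  assert (Hneg : dg c * (s - t) <= 0).
  { unfold dg, sg in *. destruct (Rle_dec t s).
    - assert (0 <= E c) by (unfold E; nra).
      replace (dE c * exp (- C * 1 * (c - t)) + E c * (exp (- C * 1 * (c - t)) * (- C * 1)))
        with ((dE c - C * E c) * exp (- C * 1 * (c - t))) by ring.
      assert ((dE c - C * E c) * exp (- C * 1 * (c - t)) <= 0) by nra. nra.
    - replace (dE c * exp (- C * -1 * (c - t)) + E c * (exp (- C * -1 * (c - t)) * (- C * -1)))
        with ((dE c + C * E c) * exp (- C * -1 * (c - t))) by ring.
      assert (0 <= (dE c + C * E c) * exp (- C * -1 * (c - t))) by nra. nra. }
  assert (Hgs : g s <= 0) by lra.
  unfold g, E in Hgs.
  assert (Hes := exp_pos (- C * sg * (s - t))).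
  assert (q s * q s + q1 s * q1 s <= 0) by nra.
  split; nra.
Qed.



Lemma lub_approx (E : R -> Prop) S y : is_lub E S -> y < S -> exists s, E s /\ y < s.
Proof.
  intros [Hub Hl] Hy. apply NNPP. intro Hn.
  assert (is_upper_bound E y).
  { intros s Hs. destruct (Rle_dec s y); auto. exfalso; apply Hn; exists s; split; auto; lra. }
  specialize (Hl y H). lra.
Qed.

Lemma conn_right (Z : R -> Prop) x0 x1 : x0 <= x1 ->
 (forall t, x0 <= t <= x1 -> Z t -> exists d, 0<d /\ forall u, Rabs (u-t) < d -> Z u) ->
 (forall t, x0 <= t <= x1 -> (forall e, 0 < e -> exists u, Rabs (u - t) < e /\ Z u) -> Z t) ->
 Z x0 -> Z x1.
Proof.
  intros H01 Hop Hcl Z0.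
  set (E := fun s => x0 <= s <= x1 /\ forall u, x0 <= u <= s -> Z u).
  destruct (completeness E) as [S HS].
  { exists x1. intros s [Hs _]. lra. }
  { exists x0. split. lra. intros u Hu. replace u with x0 by lra. auto. }
  assert (HS0 : x0 <= S) by (apply (proj1 HS); split; [lra| intros u Hu; replace u with x0 by lra; auto]).
  assert (HS1 : S <= x1) by (apply (proj2 HS); intros s [Hs _]; lra).
  assert (Zlt : forall u, x0 <= u < S -> Z u).
  { intros u Hu. destruct (lub_approx E S u HS ltac:(lra)) as [s [[Hs1 Hs2] Hus]].
    apply Hs2. lra. }
  assert (ZS : Z S).
  { apply Hcl. lra. intros e He. destruct (Rlt_dec x0 S).
    - destruct (lub_approx E S (Rmax x0 (S - e/2)) HS) as [s [[Hs1 Hs2] Hus]].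
      { unfold Rmax; destruct (Rle_dec x0 (S - e/2)); lra. }
      exists s. split. 
      + assert (s <= S) by (apply (proj1 HS); split; auto).
        pose proof (Rmax_r x0 (S - e/2)). apply Rabs_def1; lra.
      + apply Hs2. pose proof (Rmax_l x0 (S - e/2)). lra.
    - exists x0. split. replace (x0 - S) with 0 by lra. rewrite Rabs_R0. lra. auto. }
  destruct (Req_dec S x1) as [-> | Hne]; auto.
  exfalso. destruct (Hop S ltac:(lra) ZS) as [d [Hd Hz]].
  set (s := Rmin (S + d/2) x1).
  assert (E s).
  { split. unfold s, Rmin; destruct (Rle_dec (S + d/2) x1); lra.
    intros u Hu. destruct (Rlt_dec u S). apply Zlt; lra.
    apply Hz. assert (s <= S + d/2) by apply Rmin_l. apply Rabs_def1; lra. }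
  assert (s <= S) by (apply (proj1 HS); auto).
  unfold s, Rmin in H0; destruct (Rle_dec (S + d/2) x1); lra.
Qed.

Lemma conn (Z : R -> Prop) x0 x1 :
 (forall t, Rmin x0 x1 <= t <= Rmax x0 x1 -> Z t -> exists d, 0<d /\ forall u, Rabs (u-t) < d -> Z u) ->
 (forall t, Rmin x0 x1 <= t <= Rmax x0 x1 -> (forall e, 0 < e -> exists u, Rabs (u - t) < e /\ Z u) -> Z t) ->
 Z x0 -> Z x1.
Proof.
  intros Hop Hcl Z0. unfold Rmin, Rmax in *. destruct (Rle_dec x0 x1).
  - apply (conn_right Z x0 x1); auto.
  - rewrite <- (Ropp_involutive x1).
    apply (conn_right (fun u => Z (- u)) (- x0) (- x1)).
    + lra.
    + intros t Ht Zt. destruct (Hop (-t) ltac:(lra) Zt) as [d [Hd Hz]].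
      exists d. split; auto. intros u Hu. apply Hz.
      replace (- u - - t) with (- (u - t)) by ring. rewrite Rabs_Ropp; auto.
    + intros t Ht Hc. apply Hcl. lra. intros e He. destruct (Hc e He) as [u [Hu Zu]].
      exists (-u). split; auto. replace (- u - - t) with (- (u - t)) by ring. rewrite Rabs_Ropp; auto.
    + rewrite Ropp_involutive; auto.
Qed.





Lemma isd_const c x : is_derive (fun _ => c) x 0.
Proof. apply (is_derive_const c x). Qed.

Lemma isd_eq (f : R -> R) (x l l' : R) : is_derive f x l -> l = l' -> is_derive f x l'.
Proof. intros H ->; exact H. Qed.

Lemma poly2_der c2 c1 c0 x : is_derive (poly2 c2 c1 c0) x (2*c2*x + c1).
Proof. unfold poly2. auto_derive; auto. match goal with |- ?A = ?B => change (@eq R A B) end. ring. Qed.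
Lemma poly1_der l1 l0 x : is_derive (poly1 l1 l0) x l1.
Proof. unfold poly1. auto_derive; auto. match goal with |- ?A = ?B => change (@eq R A B) end. ring. Qed.
Lemma Dpoly2 c2 c1 c0 x : Derive (poly2 c2 c1 c0) x = 2*c2*x + c1.
Proof. apply is_derive_unique, poly2_der. Qed.
Lemma DDpoly2 c2 c1 c0 x : Derive (Derive (poly2 c2 c1 c0)) x = 2*c2.
Proof. rewrite (Derive_ext _ (fun x => 2*c2*x+c1)) by apply Dpoly2.
  apply is_derive_unique. auto_derive; auto. match goal with |- ?A = ?B => change (@eq R A B) end. ring. Qed.
Lemma Dpoly1 l1 l0 x : Derive (poly1 l1 l0) x = l1.
Proof. apply is_derive_unique, poly1_der. Qed.

Definition Dfx (c2 c1 c0 l1 l0 : R) (p : R -> R) (x y : R) : R :=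
  Derive p x * y + (2*c2*x+c1) * Derive p x + poly2 c2 c1 c0 x * Derive (Derive p) x
  - (l1 * p x + poly1 l1 l0 x * Derive p x).

Lemma fp_dx c2 c1 c0 l1 l0 p x y : ex_derive p x -> ex_derive (Derive p) x ->
  is_derive (fun t => f_p (poly2 c2 c1 c0) (poly1 l1 l0) p t y) x (Dfx c2 c1 c0 l1 l0 p x y).
Proof.
  intros H1 H2. apply Derive_correct in H1. apply Derive_correct in H2.
  unfold f_p, Dfx.
  replace (Derive p x * y + (2*c2*x+c1) * Derive p x + poly2 c2 c1 c0 x * Derive (Derive p) x
  - (l1 * p x + poly1 l1 l0 x * Derive p x)) with
   ((Derive p x * y + p x * 0) + ((2*c2*x+c1) * Derive p x + poly2 c2 c1 c0 x * Derive (Derive p) x)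
  - (l1 * p x + poly1 l1 l0 x * Derive p x)) by ring.
  apply (isd_minus (fun t => p t * y + poly2 c2 c1 c0 t * Derive p t) (fun t => poly1 l1 l0 t * p t)).
  - apply (isd_plus (fun t => p t * y) (fun t => poly2 c2 c1 c0 t * Derive p t)).
    + apply (isd_mul p (fun _ => y)); auto. apply isd_const.
    + apply (isd_mul (poly2 c2 c1 c0) (Derive p)); auto. apply poly2_der.
  - apply (isd_mul (poly1 l1 l0) p); auto. apply poly1_der.
Qed.

Lemma fp_dy c2 c1 c0 l1 l0 p x y :
  is_derive (fun t => f_p (poly2 c2 c1 c0) (poly1 l1 l0) p x t) y (p x).
Proof.
  unfold f_p. eapply isd_eq.
  apply (isd_minus (fun t => p x * t + poly2 c2 c1 c0 x * Derive p x) (fun _ => poly1 l1 l0 x * p x)).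
  2: apply isd_const.
  apply (isd_plus (fun t => p x * t) (fun _ => poly2 c2 c1 c0 x * Derive p x)).
  2: apply isd_const.
  apply (isd_mul (fun _ => p x) (fun t => t)). apply isd_const. apply (is_derive_id y).
  simpl. change (@eq R (0 * y + p x * 1 + 0 - 0) (p x)). ring.
Qed.

Definition ODE (n c2 c1 c0 l1 l0 : R) (p : R -> R) (x : R) : R :=
  poly2 c2 c1 c0 x * Derive (Derive p) x + ((2*c2*x+c1) - 2 * poly1 l1 l0 x) * Derive p x
    + n / 2 * (4 * l1 - (n + 1) * (2*c2)) * p x.

Lemma key n c2 c1 c0 l1 l0 p x y :
  ODE n c2 c1 c0 l1 l0 p x = 0 ->
  poly2 c2 c1 c0 x * Dfx c2 c1 c0 l1 l0 p x y + ydot n (poly2 c2 c1 c0) (poly1 l1 l0) x y * p x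
  = (y + poly1 l1 l0 x) * f_p (poly2 c2 c1 c0) (poly1 l1 l0) p x y.
Proof.
  intros H. unfold ydot. rewrite Dpoly1, DDpoly2.
  match goal with |- ?A = ?B => assert (A - B = poly2 c2 c1 c0 x * ODE n c2 c1 c0 l1 l0 p x) end.
  { unfold ODE, Dfx, f_p. field. }
  rewrite H, Rmult_0_r in H0. lra.
Qed.

Lemma sol_ODE n c2 c1 c0 l1 l0 a b p x :
  is_C2_solution n (poly2 c2 c1 c0) (poly1 l1 l0) a b p -> in_interval a b x ->
  ex_derive p x /\ ex_derive (Derive p) x /\ continuous (Derive (Derive p)) x /\
  ODE n c2 c1 c0 l1 l0 p x = 0.
Proof.
  intros H Hx. destruct (H x Hx) as [A [B [C D]]]. repeat split; auto.
  rewrite Dpoly2, DDpoly2, Dpoly1 in D. unfold ODE. exact D.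
Qed.


Lemma int_open a b x : in_interval a b x -> exists r, 0 < r /\ forall u, Rabs (u - x) < r -> in_interval a b u.
Proof.
  unfold in_interval. intros [Ha Hb].
  destruct a as [a| |]; destruct b as [b| |]; simpl in *; try contradiction;
  [ exists (Rmin (x - a) (b - x)) | exists (x - a) | exists (b - x) | exists 1 ];
  (split; [ try apply Rmin_glb_lt; lra | intros u Hu; apply Rabs_def2 in Hu ]);
  try (pose proof (Rmin_l (x - a) (b - x)); pose proof (Rmin_r (x - a) (b - x)));
  simpl; lra.
Qed.

Lemma int_conv a b x0 x1 t : in_interval a b x0 -> in_interval a b x1 ->
  Rmin x0 x1 <= t <= Rmax x0 x1 -> in_interval a b t.
Proof.
  unfold in_interval, Rmin, Rmax. intros [H1 H2] [H3 H4] Ht.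
  destruct (Rle_dec x0 x1);
  destruct a as [a| |]; destruct b as [b| |]; simpl in *; try contradiction; split; lra.
Qed.

Lemma lift1 f x y : continuity_pt f x -> continuity_2d_pt (fun u v => f u) x y.
Proof. intros H. apply (continuity_1d_2d_pt_comp f (fun u v => u) x y H (continuity_2d_pt_id1 x y)). Qed.

Lemma cpt_of_ex f x : ex_derive f x -> continuity_pt f x.
Proof. intros H. apply continuity_pt_filterlim. apply (@ex_derive_continuous R_AbsRing R_NormedModule f x H). Qed.

Ltac c2d := repeat match goal with
  | |- continuity_2d_pt (fun u v => _ + _) _ _ => apply continuity_2d_pt_plus
  | |- continuity_2d_pt (fun u v => _ - _) _ _ => apply continuity_2d_pt_minus
  | |- continuity_2d_pt (fun u v => _ * _) _ _ => apply continuity_2d_pt_mult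
  | |- continuity_2d_pt (fun u v => v) _ _ => apply continuity_2d_pt_id2
  | |- continuity_2d_pt (fun u v => _) _ _ => apply lift1
  end.

Ltac cfin := match goal with
  | |- continuity_pt (poly2 _ _ _) _ => apply cpt_of_ex; eexists; apply poly2_der
  | |- continuity_pt (poly1 _ _) _ => apply cpt_of_ex; eexists; apply poly1_der
  | H : continuity_pt ?f ?x |- continuity_pt ?f ?x => exact H
  | |- _ => apply cpt_of_ex; auto_derive; auto
  end.

Lemma cont_F c2 c1 c0 l1 l0 p x y : continuity_pt p x -> continuity_pt (Derive p) x ->
  continuity_2d_pt (f_p (poly2 c2 c1 c0) (poly1 l1 l0) p) x y.
Proof.
  intros H1 H2. unfold f_p. c2d; cfin.
Qed.

Lemma cont_Dx c2 c1 c0 l1 l0 p x y : continuity_pt p x -> continuity_pt (Derive p) x ->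
  continuity_pt (Derive (Derive p)) x ->
  continuity_2d_pt (Dfx c2 c1 c0 l1 l0 p) x y.
Proof.
  intros H1 H2 H3. unfold Dfx. c2d; cfin.
Qed.


Lemma cont_zero f t : continuity_pt f t -> (forall e, 0<e -> exists u, Rabs(u-t)<e /\ f u = 0) -> f t = 0.
Proof.
  intros Hc Ha. destruct (Req_dec (f t) 0) as [|H]; auto. exfalso.
  apply continuity_pt_locally with (eps := mkposreal (Rabs (f t)) (Rabs_pos_lt _ H)) in Hc.
  destruct (loc_ex _ _ Hc) as [d [Hd Hl]]. destruct (Ha d Hd) as [u [Hu Hfu]].
  specialize (Hl u Hu). simpl in Hl. rewrite Hfu in Hl.
  replace (0 - f t) with (- f t) in Hl by ring; rewrite Rabs_Ropp in Hl; lra.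
Qed.

Lemma isd_q f g x df dg k : is_derive f x df -> is_derive g x dg ->
  is_derive (fun t => f t - k * g t) x (df - k * dg).
Proof. intros. apply (isd_minus f (fun t => k * g t)); auto. apply is_derive_scal; auto. Qed.

Theorem part2_nc (n c2 c1 c0 l1 l0 : R) (a b : Rbar) :
  (forall x, in_interval a b x -> poly2 c2 c1 c0 x <> 0) ->
  forall p1 p2 : R -> R,
     fundamental_system n (poly2 c2 c1 c0) (poly1 l1 l0) a b p1 p2 ->
  forall V : R -> R -> Prop, open2 V -> (exists x y, V x y) ->
     (forall x y, V x y -> in_interval a b x /\ f_p (poly2 c2 c1 c0) (poly1 l1 l0) p2 x y <> 0) ->
     exists x1 y1 x2 y2, V x1 y1 /\ V x2 y2 /\
       f_p (poly2 c2 c1 c0) (poly1 l1 l0) p1 x1 y1 / f_p (poly2 c2 c1 c0) (poly1 l1 l0) p2 x1 y1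
       <> f_p (poly2 c2 c1 c0) (poly1 l1 l0) p1 x2 y2 / f_p (poly2 c2 c1 c0) (poly1 l1 l0) p2 x2 y2.
Proof.
  intros HOm p1 p2 [S1 [S2 Hind]] V HV [x0 [y0 H0]] HVU.
  apply NNPP; intro Hc.
  set (k := f_p (poly2 c2 c1 c0) (poly1 l1 l0) p1 x0 y0 / f_p (poly2 c2 c1 c0) (poly1 l1 l0) p2 x0 y0).
  assert (Hrel : forall u v, V u v -> f_p (poly2 c2 c1 c0) (poly1 l1 l0) p1 u v
                                     = k * f_p (poly2 c2 c1 c0) (poly1 l1 l0) p2 u v).
  { intros u v Huv. destruct (HVU u v Huv) as [_ Hne].
    assert (Heq : f_p (poly2 c2 c1 c0) (poly1 l1 l0) p1 u v / f_p (poly2 c2 c1 c0) (poly1 l1 l0) p2 u v = k).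
    { apply NNPP; intro Hn. apply Hc. exists u, v, x0, y0. auto. }
    rewrite <- Heq. field. auto. }
  destruct (HV x0 y0 H0) as [eps Heps].
  assert (Hx0 : in_interval a b x0) by apply (HVU x0 y0 H0).
  set (q := fun t => p1 t - k * p2 t).
  set (q1 := fun t => Derive p1 t - k * Derive p2 t).
  set (q2 := fun t => Derive (Derive p1) t - k * Derive (Derive p2) t).
  assert (Hq0 : forall u, Rabs (u - x0) < eps -> q u = 0).
  { intros u Hu.
    assert (A1 := Hrel u y0 (Heps u y0 Hu ltac:(rewrite Rminus_diag, Rabs_R0; apply cond_pos))).
    assert (A2 := Hrel u (y0 + eps/2) (Heps u _ Hu ltac:(replace (y0 + eps/2 - y0) with (eps/2) by ring;
       rewrite Rabs_pos_eq; pose proof (cond_pos eps); lra))).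
    unfold f_p in A1, A2. unfold q.
    assert (Hp := cond_pos eps).
    assert ((p1 u - k * p2 u) * (eps / 2) = 0) by lra.
    apply Rmult_integral in H. destruct H; auto. lra. }
  assert (Dq : forall u, in_interval a b u -> is_derive q u (q1 u)).
  { intros u Hu. destruct (S1 u Hu) as [E1 _]. destruct (S2 u Hu) as [E2 _].
    apply isd_q; apply Derive_correct; auto. }
  assert (Dq1 : forall u, in_interval a b u -> is_derive q1 u (q2 u)).
  { intros u Hu. destruct (S1 u Hu) as [_ [E1 _]]. destruct (S2 u Hu) as [_ [E2 _]].
    apply isd_q; apply Derive_correct; auto. }
  set (Z := fun t => q t = 0 /\ q1 t = 0).
  assert (Z0 : Z x0).
  { split. apply Hq0. rewrite Rminus_diag, Rabs_R0; apply cond_pos.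
    assert (Hz : is_derive q x0 0).
    { apply (is_derive_ext_loc (fun _ => 0) q x0 0).
      exists eps. intros t Ht. symmetry. apply Hq0. exact Ht.
      apply isd_const. }
    rewrite <- (is_derive_unique _ _ _ Hz). symmetry. apply is_derive_unique. auto. }
  assert (Zall : forall x1, in_interval a b x1 -> Z x1).
  { intros x1 Hx1. apply (conn Z x0 x1); auto.
    - intros t Ht Zt. assert (Hti : in_interval a b t) by (apply (int_conv a b x0 x1); auto).
      destruct (int_open a b t Hti) as [r [Hr Hrb]].
      destruct (local_zero q q1 q2
        (fun u => - ((2*c2*u + c1) - 2 * poly1 l1 l0 u) / poly2 c2 c1 c0 u)
        (fun u => - (n / 2 * (4 * l1 - (n + 1) * (2*c2))) / poly2 c2 c1 c0 u) t r Hr)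
        as [d [Hd Hdz]].
      + intros u Hu. specialize (Hrb u Hu). split; [auto|split; [auto|]].
        destruct (sol_ODE n c2 c1 c0 l1 l0 a b p1 u S1 Hrb) as [_ [_ [_ O1]]].
        destruct (sol_ODE n c2 c1 c0 l1 l0 a b p2 u S2 Hrb) as [_ [_ [_ O2]]].
        specialize (HOm u Hrb).
        assert (HR : poly2 c2 c1 c0 u * q2 u + ((2*c2*u + c1) - 2 * poly1 l1 l0 u) * q1 u
                 + (n / 2 * (4 * l1 - (n + 1) * (2*c2))) * q u
                 = ODE n c2 c1 c0 l1 l0 p1 u - k * ODE n c2 c1 c0 l1 l0 p2 u)
          by (unfold ODE, q, q1, q2; ring).
        rewrite O1, O2 in HR.
        apply (Rmult_eq_reg_l (poly2 c2 c1 c0 u)); auto.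
        replace (poly2 c2 c1 c0 u * q2 u) with
          (- (((2*c2*u + c1) - 2 * poly1 l1 l0 u) * q1 u) - (n / 2 * (4 * l1 - (n + 1) * (2*c2))) * q u) by lra.
        field. auto.
      + apply (@ex_derive_continuous R_AbsRing R_NormedModule).
        specialize (HOm t Hti). unfold poly2, poly1 in *. auto_derive. auto.
      + apply (@ex_derive_continuous R_AbsRing R_NormedModule).
        specialize (HOm t Hti). unfold poly2, poly1 in *. auto_derive. auto.
      + apply Zt.
      + apply Zt.
      + exists d. split; auto.
    - intros t Ht Hcl. assert (Hti : in_interval a b t) by (apply (int_conv a b x0 x1); auto).
      split.
      + apply cont_zero. apply cpt_of_ex. eexists; apply Dq; auto.
        intros e He. destruct (Hcl e He) as [u [Hu [Zu _]]]. eauto.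
      + apply cont_zero. apply cpt_of_ex. eexists; apply Dq1; auto.
        intros e He. destruct (Hcl e He) as [u [Hu [_ Zu]]]. eauto. }
  destruct (Hind 1 (-k)) as [H1 _].
  { intros x Hx. destruct (Zall x Hx) as [Hq _]. unfold q in Hq. lra. }
  lra.
Qed.


Lemma cpt_of_cont f x : continuous f x -> continuity_pt f x.
Proof. intros H. apply continuity_pt_filterlim. exact H. Qed.

Theorem mainTheorem10 (n c2 c1 c0 l1 l0 : R) (a b : Rbar) :
  ~ (c2 = 0 /\ c1 = 0 /\ c0 = 0) ->
  Rbar_lt a b ->
  (forall x, in_interval a b x -> poly2 c2 c1 c0 x <> 0) ->
  (* (i) *)
  (forall p : R -> R, is_C2_solution n (poly2 c2 c1 c0) (poly1 l1 l0) a b p ->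
     forall x y : R, in_interval a b x ->
       ex_derive (fun t => f_p (poly2 c2 c1 c0) (poly1 l1 l0) p t y) x /\
       ex_derive (fun t => f_p (poly2 c2 c1 c0) (poly1 l1 l0) p x t) y /\
       poly2 c2 c1 c0 x * dx (f_p (poly2 c2 c1 c0) (poly1 l1 l0) p) x y
       + ydot n (poly2 c2 c1 c0) (poly1 l1 l0) x y
         * dy (f_p (poly2 c2 c1 c0) (poly1 l1 l0) p) x y
       = (y + poly1 l1 l0 x) * f_p (poly2 c2 c1 c0) (poly1 l1 l0) p x y) /\
  (* (ii) *)
  (forall p1 p2 : R -> R,
     fundamental_system n (poly2 c2 c1 c0) (poly1 l1 l0) a b p1 p2 ->
     first_integral (fun x _ => poly2 c2 c1 c0 x)
       (ydot n (poly2 c2 c1 c0) (poly1 l1 l0))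
       (fun x y => f_p (poly2 c2 c1 c0) (poly1 l1 l0) p1 x y
                   / f_p (poly2 c2 c1 c0) (poly1 l1 l0) p2 x y)
       (fun x y => in_interval a b x /\ f_p (poly2 c2 c1 c0) (poly1 l1 l0) p2 x y <> 0)).
Proof.
  intros Hnz Hab HOm. split.
  { intros p Hp x y Hx.
    destruct (sol_ODE n c2 c1 c0 l1 l0 a b p x Hp Hx) as [E1 [E2 [E3 E4]]].
    split; [eexists; apply fp_dx; auto|]. split; [eexists; apply fp_dy|].
    replace (dx (f_p (poly2 c2 c1 c0) (poly1 l1 l0) p) x y) with (Dfx c2 c1 c0 l1 l0 p x y)
      by (symmetry; apply (is_derive_unique _ _ _ (fp_dx c2 c1 c0 l1 l0 p x y E1 E2))).
    replace (dy (f_p (poly2 c2 c1 c0) (poly1 l1 l0) p) x y) with (p x)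
      by (symmetry; apply (is_derive_unique _ _ _ (fp_dy c2 c1 c0 l1 l0 p x y))).
    apply key; auto. }
  intros p1 p2 Hfs. split.
  2: { intros V HV Hne HVU. apply (part2_nc n c2 c1 c0 l1 l0 a b HOm p1 p2 Hfs V HV Hne HVU). }
  destruct Hfs as [S1 [S2 _]].
  intros x y [Hx Hf2].
  set (F1 := f_p (poly2 c2 c1 c0) (poly1 l1 l0) p1).
  set (F2 := f_p (poly2 c2 c1 c0) (poly1 l1 l0) p2).
  set (D1 := Dfx c2 c1 c0 l1 l0 p1).
  set (D2 := Dfx c2 c1 c0 l1 l0 p2).
  set (Gx := fun u v => (D1 u v * F2 u v - F1 u v * D2 u v) / F2 u v ^ 2).
  set (Gy := fun u v => (p1 u * F2 u v - F1 u v * p2 u) / F2 u v ^ 2).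
  assert (HDx : forall u v, in_interval a b u -> F2 u v <> 0 ->
     is_derive (fun t => F1 t v / F2 t v) u (Gx u v)).
  { intros u v Hu Hne.
    destruct (S1 u Hu) as [A1 [A2 _]]. destruct (S2 u Hu) as [B1 [B2 _]].
    apply (is_derive_div (fun t => F1 t v) (fun t => F2 t v)); auto.
    apply fp_dx; auto. apply fp_dx; auto. }
  assert (HDy : forall u v, F2 u v <> 0 ->
     is_derive (fun t => F1 u t / F2 u t) v (Gy u v)).
  { intros u v Hne.
    apply (is_derive_div (fun t => F1 u t) (fun t => F2 u t)); auto.
    apply fp_dy. apply fp_dy. }
  destruct (S1 x Hx) as [A1 [A2 [A3 _]]]. destruct (S2 x Hx) as [B1 [B2 [B3 _]]].
  assert (CF2 : continuity_2d_pt F2 x y)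
    by (apply cont_F; apply cpt_of_ex; auto).
  assert (CF1 : continuity_2d_pt F1 x y)
    by (apply cont_F; apply cpt_of_ex; auto).
  assert (CD1 : continuity_2d_pt D1 x y)
    by (apply cont_Dx; [apply cpt_of_ex; auto|apply cpt_of_ex; auto|apply cpt_of_cont; auto]).
  assert (CD2 : continuity_2d_pt D2 x y)
    by (apply cont_Dx; [apply cpt_of_ex; auto|apply cpt_of_ex; auto|apply cpt_of_cont; auto]).
  assert (Loc : exists d, 0 < d /\ forall u v, Rabs (u - x) < d -> Rabs (v - y) < d ->
             in_interval a b u /\ F2 u v <> 0).
  { destruct (int_open a b x Hx) as [r [Hr Hrb]].
    destruct (continuity_2d_pt_neq_0 F2 x y CF2 Hf2) as [d Hd].
    exists (Rmin r d). split. apply Rmin_glb_lt; auto. apply cond_pos.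
    intros u v Hu Hv. split. apply Hrb. eapply Rlt_le_trans; [exact Hu| apply Rmin_l].
    apply Hd; eapply Rlt_le_trans; eauto; apply Rmin_r. }
  destruct Loc as [d [Hd Hloc]].
  assert (Hinv : continuity_2d_pt (fun u v => / (F2 u v * F2 u v)) x y).
  { apply continuity_2d_pt_inv. apply continuity_2d_pt_mult; auto.
    apply Rmult_integral_contrapositive; auto. }
  split; [eexists; apply HDx; auto|].
  split; [eexists; apply HDy; auto|].
  split.
  { apply (continuity_2d_pt_ext_loc Gx).
    - exists (mkposreal d Hd). intros u v Hu Hv. destruct (Hloc u v Hu Hv) as [Hu' Hne].
      unfold dx. symmetry. apply is_derive_unique. apply HDx; auto.
    - apply (continuity_2d_pt_ext (fun u v => (D1 u v * F2 u v - F1 u v * D2 u v) * / (F2 u v * F2 u v))).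
      + intros u v. unfold Gx, Rdiv. simpl. rewrite Rmult_1_r. reflexivity.
      + apply continuity_2d_pt_mult; auto.
        apply continuity_2d_pt_minus; apply continuity_2d_pt_mult; auto. }
  split.
  { apply (continuity_2d_pt_ext_loc Gy).
    - exists (mkposreal d Hd). intros u v Hu Hv. destruct (Hloc u v Hu Hv) as [Hu' Hne].
      unfold dy. symmetry. apply is_derive_unique. apply HDy; auto.
    - apply (continuity_2d_pt_ext (fun u v => (p1 u * F2 u v - F1 u v * p2 u) * / (F2 u v * F2 u v))).
      + intros u v. unfold Gy, Rdiv. simpl. rewrite Rmult_1_r. reflexivity.
      + apply continuity_2d_pt_mult; auto.
        apply continuity_2d_pt_minus; apply continuity_2d_pt_mult; auto;
          apply lift1; apply cpt_of_ex; auto. }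
  replace (dx _ x y) with (Gx x y)
      by (symmetry; apply (is_derive_unique _ _ _ (HDx x y Hx Hf2))).
  replace (dy _ x y) with (Gy x y)
      by (symmetry; apply (is_derive_unique _ _ _ (HDy x y Hf2))).
  destruct (sol_ODE n c2 c1 c0 l1 l0 a b p1 x S1 Hx) as [_ [_ [_ O1]]].
  destruct (sol_ODE n c2 c1 c0 l1 l0 a b p2 x S2 Hx) as [_ [_ [_ O2]]].
  assert (K1 := key n c2 c1 c0 l1 l0 p1 x y O1).
  assert (K2 := key n c2 c1 c0 l1 l0 p2 x y O2).
  fold F1 D1 in K1. fold F2 D2 in K2.
  unfold Gx, Gy.
  set (Q := ydot n (poly2 c2 c1 c0) (poly1 l1 l0) x y) in *.
  set (Om := poly2 c2 c1 c0 x) in *.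
  assert (N : Om * (D1 x y * F2 x y - F1 x y * D2 x y) + Q * (p1 x * F2 x y - F1 x y * p2 x) = 0).
  { replace (Om * (D1 x y * F2 x y - F1 x y * D2 x y) + Q * (p1 x * F2 x y - F1 x y * p2 x))
      with (F2 x y * (Om * D1 x y + Q * p1 x) - F1 x y * (Om * D2 x y + Q * p2 x)) by ring.
    rewrite K1, K2. ring. }
  replace (Om * ((D1 x y * F2 x y - F1 x y * D2 x y) / F2 x y ^ 2) +
           Q * ((p1 x * F2 x y - F1 x y * p2 x) / F2 x y ^ 2))
    with ((Om * (D1 x y * F2 x y - F1 x y * D2 x y) + Q * (p1 x * F2 x y - F1 x y * p2 x)) / F2 x y ^ 2)
    by (field; auto).
  rewrite N. unfold Rdiv. ring.
Qed.
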